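(* Let $k_{ap}>0$, $k_{ad}>0$, $\omega_o>0$, $c_r>0$, $d\in\mathbb R$, $\varepsilon>0$, $L_f\ge0$. Let $f:[0,\infty)\to\mathbb R$ be absolutely continuous with $|\dot f(t)|\le L_f$ for all $t\ge0$. Consider a solution on $[0,\infty)$ of the closed-loop system $$\dot x_1=x_2,\qquad \dot x_2=f(t)-\lambda(t),$$ $$\dot\xi=-\omega_o\xi-\omega_o^2x_2+\omega_o\lambda,\qquad \hat f=\xi+\omega_o x_2,$$ $$\lambda(t)=k_{ap}\big(x_1-r\big)+k_{ad}\big(x_2-\dot r\big)+\hat f(t)-\ddot r(t),$$ where the reference converges to $d-\varepsilon$: $$r(t)=(d-\varepsilon)+\big(x_1(0)-(d-\varepsilon)\big)e^{-c_rt}+\big(x_2(0)+c_r(x_1(0)-(d-\varepsilon))\big)te^{-c_rt}.$$ Let $h$ be the impulse response of $H(s)=\frac{1}{s^2+k_{ad}s+k_{ap}}$ and $\|h\|_{L_1}=\int_0^\infty|h(\tau)|\,d\tau$. If $$\varepsilon>\|h\|_{L_1}\frac{L_f}{\omega_o},$$ then there exists $T_\varepsilon<\infty$ such that $x_1(t)\le d$ for all $t\ge T_\varepsilon$.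
   Context: Surrogate model of Lagrangian safe RL: $x_1$ models the discounted cost return of the current policy, $x_2$ its derivative, $\lambda$ the Lagrange multiplier, $f$ a lumped unknown disturbance, $(\xi,\hat f)$ a reduced-order extended state observer with gain $\omega_o$, $d$ the cost threshold and $\varepsilon$ a safety margin; $r$ is the critically damped reference (solution of $\ddot r=-2c_r\dot r-c_r^2(r-(d-\varepsilon))$, $r(0)=x_1(0)$, $\dot r(0)=x_2(0)$). The impulse response $h$ solves $\ddot h+k_{ad}\dot h+k_{ap}h=0$, $h(0)=0$, $\dot h(0)=1$. *)

(* Defs.v *)
From Stdlib Require Import Reals Lra.
From Coquelicot Require Import Coquelicot.
Open Scope R_scope.

(* Critically damped reference trajectory converging to d - eps,
   with r(0) = x10, r'(0) = x20. *)
Definition ref_traj (d eps cr x10 x20 : R) (t : R) : R :=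
  (d - eps) + (x10 - (d - eps)) * exp (- cr * t)
  + (x20 + cr * (x10 - (d - eps))) * t * exp (- cr * t).

Definition closed_loop_lambda (kap kad wo : R) (r x1 x2 xi : R -> R) (t : R) : R :=
  kap * (x1 t - r t) + kad * (x2 t - Derive r t)
  + (xi t + wo * x2 t) - Derive_n r 2 t.

(* Main.v *)
Require Import Defs.
From Stdlib Require Import Reals Lra.
From Coquelicot Require Import Coquelicot.
Open Scope R_scope.

Lemma is_derive_eq (f : R -> R) x l l' : is_derive f x l -> l = l' -> is_derive f x l'.
Proof. intros H <-; exact H. Qed.

Lemma mono_le (chi dchi : R -> R) a b : a <= b ->
  (forall x, a <= x <= b -> is_derive chi x (dchi x)) ->
  (forall x, a <= x <= b -> 0 <= dchi x) -> chi a <= chi b.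
Proof.
  intros Hab Hd Hp.
  destruct (MVT_gen chi a b dchi) as [c [Hc Heq]].
  - intros x Hx. rewrite Rmin_left in Hx by lra. rewrite Rmax_right in Hx by lra.
    apply Hd; lra.
  - intros x Hx. rewrite Rmin_left in Hx by lra. rewrite Rmax_right in Hx by lra.
    apply continuity_pt_filterlim. apply (@ex_derive_continuous R_AbsRing R_NormedModule).
    eexists; apply Hd; lra.
  - rewrite Rmin_left in Hc by lra. rewrite Rmax_right in Hc by lra.
    assert (0 <= dchi c * (b - a)).
    { apply Rmult_le_pos. apply Hp; lra. lra. }
    lra.
Qed.

Lemma cmp (phi dphi psi dpsi : R -> R) a b : a <= b ->
  (forall x, a <= x <= b -> is_derive phi x (dphi x)) ->
  (forall x, a <= x <= b -> is_derive psi x (dpsi x)) ->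
  (forall x, a <= x <= b -> Rabs (dphi x) <= dpsi x) ->
  Rabs (phi b - phi a) <= psi b - psi a.
Proof.
  intros Hab H1 H2 H3.
  assert (A1 : (fun x => psi x - phi x) a <= (fun x => psi x - phi x) b).
  { apply (mono_le (fun x => psi x - phi x) (fun x => dpsi x - dphi x)); auto.
    - intros x Hx. apply (is_derive_minus psi phi); auto.
    - intros x Hx. specialize (H3 x Hx). apply Rabs_le_between in H3. lra. }
  assert (A2 : (fun x => psi x + phi x) a <= (fun x => psi x + phi x) b).
  { apply (mono_le (fun x => psi x + phi x) (fun x => dpsi x + dphi x)); auto.
    - intros x Hx. apply (is_derive_plus psi phi); auto.
    - intros x Hx. specialize (H3 x Hx). apply Rabs_le_between in H3. lra. }
  simpl in *. apply Rabs_le; lra.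
Qed.

Lemma exp_sq_bound c x : 0 <= c * x -> (c * x) ^ 2 / 4 <= exp (c * x).
Proof.
  intros H.
  replace (c * x) with (c * x / 2 + c * x / 2) at 2 by field.
  rewrite exp_plus.
  pose proof (exp_ineq1_le (c * x / 2)).
  assert (0 <= 1 + c * x / 2) by lra.
  assert ((c*x/2) * (c*x/2) <= exp (c * x / 2) * exp (c * x / 2)).
  { apply Rmult_le_compat; lra. }
  nra.
Qed.

Lemma expo_small a b c eta : 0 <= a -> 0 <= b -> 0 < c -> 0 < eta ->
  exists T, forall t, T <= t -> (a + b * t) * exp (- (c * t)) <= eta.
Proof.
  intros Ha Hb Hc He.
  exists (Rmax 1 (4 * (a + b) / (eta * c ^ 2))).
  intros t Ht.
  pose proof (Rmax_l 1 (4 * (a + b) / (eta * c ^ 2))) as M1.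
  pose proof (Rmax_r 1 (4 * (a + b) / (eta * c ^ 2))) as M2.
  assert (t1 : 1 <= t) by lra.
  assert (t2 : 4 * (a + b) / (eta * c ^ 2) <= t) by lra.
  assert (Hec : 0 < eta * c ^ 2) by (apply Rmult_lt_0_compat; nra).
  assert (t3 : 4 * (a + b) <= t * (eta * c ^ 2)).
  { apply (Rmult_le_compat_r (eta * c ^ 2)) in t2; [|lra].
    unfold Rdiv in t2. rewrite Rmult_assoc, Rinv_l in t2 by lra. lra. }
  pose proof (exp_sq_bound c t ltac:(nra)) as E.
  rewrite exp_Ropp.
  assert (Ep : 0 < exp (c * t)) by apply exp_pos.
  apply (Rmult_le_reg_r (exp (c * t))); auto.
  rewrite Rmult_assoc, Rinv_l by lra.
  assert (a + b * t <= (a + b) * t) by nra.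
  assert ((a + b) * t * 4 <= eta * (c * t) ^ 2) by nra.
  nra.
Qed.


Lemma h_decay (kap kad : R) (h h' : R -> R) : 0 < kap -> 0 < kad ->
  (forall t, is_derive h t (h' t)) ->
  (forall t, is_derive h' t (- kad * h' t - kap * h t)) ->
  h 0 = 0 -> h' 0 = 1 ->
  forall eta, 0 < eta -> exists T, forall t, T <= t -> Rabs (h t) <= eta /\ Rabs (h' t) <= eta.
Proof.
  intros Hkap Hkad Hh Hh' H0 H0' eta Heta.
  set (V := fun t => h' t ^ 2 + kap * h t ^ 2 + kad * h t * h' t + kad ^ 2 / 2 * h t ^ 2).
  set (M := 3/2 + kad ^ 2 / kap).
  assert (HM : 0 < M) by (unfold M; assert (0 <= kad ^2 / kap) by (apply Rdiv_le_0_compat; nra); lra).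
  set (al := kad / M).
  assert (Hal : 0 < al) by (unfold al; apply Rdiv_lt_0_compat; lra).
  assert (VE : forall t, V t <= M * (h' t ^ 2 + kap * h t ^ 2)).
  { intro t. unfold V, M. set (p := h' t). set (q := h t).
    assert (kad ^ 2 / kap * p ^ 2 >= 0) by (apply Rle_ge, Rmult_le_pos; [apply Rdiv_le_0_compat; nra | nra]).
    replace ((3 / 2 + kad ^ 2 / kap) * (p ^ 2 + kap * q ^ 2)) with
      (3/2 * p^2 + 3/2 * kap * q^2 + kad ^ 2 / kap * p ^ 2 + kad^2 * q^2) by (field; lra).
    assert (0 <= (p - kad * q) ^ 2) by apply pow2_ge_0.
    assert (0 <= kap * q ^ 2) by (apply Rmult_le_pos; nra).
    nra. }
  assert (Vlow : forall t, h' t ^ 2 / 2 + kap * h t ^ 2 <= V t).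
  { intro t. unfold V. assert (0 <= (h' t + kad * h t) ^ 2) by apply pow2_ge_0. nra. }
  assert (Hmono : forall t, 0 <= t -> V t * exp (al * t) <= V 0 * exp (al * 0)).
  { intros t Ht.
    assert (K := mono_le (fun s => - (V s * exp (al * s)))
      (fun s => - ((- kad * (h' s ^ 2 + kap * h s ^ 2) + al * V s) * exp (al * s))) 0 t Ht).
    cbv beta in K. enough (- (V 0 * exp (al * 0)) <= - (V t * exp (al * t))) by lra.
    apply K.
    - intros x _. unfold V. auto_derive.
      + repeat split; eexists; eauto.
      + replace (Derive (fun y => h y) x) with (h' x) by (symmetry; apply is_derive_unique; apply Hh).
        replace (Derive (fun y => h' y) x) with (- kad * h' x - kap * h x) by (symmetry; apply is_derive_unique; apply Hh').
        clear -x. clearbody al. field.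
    - intros x _. apply Ropp_0_ge_le_contravar. apply Rle_ge.
      rewrite <- (Rmult_0_l (exp (al * x))). apply Rmult_le_compat_r. left; apply exp_pos.
      specialize (VE x).
      assert (al * V x <= al * (M * (h' x ^ 2 + kap * h x ^ 2))) by (apply Rmult_le_compat_l; lra).
      replace (al * (M * (h' x ^ 2 + kap * h x ^ 2))) with (kad * (h' x ^ 2 + kap * h x ^ 2)) in H by (unfold al; field; lra).
      lra. }
  assert (V0 : V 0 = 1) by (unfold V; rewrite H0, H0'; ring).
  set (tg := Rmin (kap * eta ^ 2) (eta ^ 2 / 2)).
  assert (Htg : 0 < tg) by (assert (0 < eta ^ 2) by (apply pow_lt; lra); unfold tg; apply Rmin_glb_lt; [apply Rmult_lt_0_compat|]; lra).
  destruct (expo_small 1 0 al tg) as [T HT]; try lra.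
  exists (Rmax T 0). intros t Ht.
  assert (t0 : 0 <= t) by (pose proof (Rmax_r T 0); lra).
  assert (tT : T <= t) by (pose proof (Rmax_l T 0); lra).
  specialize (HT t tT). replace (1 + 0 * t) with 1 in HT by ring.
  specialize (Hmono t t0). rewrite V0, Rmult_0_r, exp_0 in Hmono.
  assert (Vt : V t <= exp (- (al * t))).
  { rewrite exp_Ropp. apply (Rmult_le_reg_r (exp (al * t))). apply exp_pos.
    rewrite Rinv_l. lra. pose proof (exp_pos (al * t)); lra. }
  assert (Vtg : V t <= tg) by lra.
  pose proof (Rmin_l (kap * eta ^ 2) (eta ^ 2 / 2)) as m1.
  pose proof (Rmin_r (kap * eta ^ 2) (eta ^ 2 / 2)) as m2.
  specialize (Vlow t). fold tg in m1, m2.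
  assert (Hp2 : 0 <= h' t ^ 2) by apply pow2_ge_0.
  assert (Hq2 : kap * h t ^ 2 <= kap * eta ^ 2) by lra.
  assert (Hq : h t ^ 2 <= eta ^ 2) by (apply (Rmult_le_reg_l kap); lra).
  assert (0 <= kap * h t ^ 2) by (apply Rmult_le_pos; [lra|apply pow2_ge_0]).
  assert (Hp : h' t ^ 2 <= eta ^ 2) by lra.
  rewrite <- (Rabs_pos_eq eta) by lra.
  split; [apply (Rsqr_le_abs_0 (h t) eta) | apply (Rsqr_le_abs_0 (h' t) eta)]; unfold Rsqr; simpl in *; lra.
Qed.


Lemma N_le (g : R -> R) normh :
  (forall u, continuous g u) -> (forall u, 0 <= g u) ->
  is_RInt_gen g (at_point 0) (Rbar_locally p_infty) normh ->
  forall tau, 0 <= tau -> RInt g 0 tau <= normh.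
Proof.
  intros Hc Hp H tau Htau.
  destruct (Rle_or_lt (RInt g 0 tau) normh) as [|Hlt]; auto.
  exfalso.
  set (dl := RInt g 0 tau - normh).
  assert (Hdl : 0 < dl) by (unfold dl; lra).
  specialize (H (ball normh dl) (locally_ball normh (mkposreal dl Hdl))).
  destruct H as [Q R HQ HR Himp].
  destruct HR as [M HM].
  set (b := Rmax (M + 1) tau).
  assert (Hb1 : M < b) by (unfold b; pose proof (Rmax_l (M+1) tau); lra).
  assert (Hb2 : tau <= b) by (unfold b; apply Rmax_r).
  destruct (Himp 0 b HQ (HM b Hb1)) as [y [Hy1 Hy2]].
  simpl in Hy1.
  assert (Ey : RInt g 0 b = y) by (apply is_RInt_unique; exact Hy1).
  assert (ex : forall a c, ex_RInt g a c) by (intros; apply (@ex_RInt_continuous R_CompleteNormedModule); intros; apply Hc).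
  assert (Ch := RInt_Chasles g 0 tau b (ex _ _) (ex _ _)).
  assert (0 <= RInt g tau b) by (apply RInt_ge_0; auto).
  change (plus (RInt g 0 tau) (RInt g tau b)) with (RInt g 0 tau + RInt g tau b) in Ch.
  change (Rabs (y - normh) < dl) in Hy2.
  apply Rabs_lt_between in Hy2. unfold dl in Hy2. lra.
Qed.

Lemma N_deriv (g : R -> R) : (forall u, continuous g u) ->
  forall tau, is_derive (fun b => RInt g 0 b) tau (g tau).
Proof.
  intros Hc tau.
  apply (is_derive_RInt g (fun b => RInt g 0 b) 0 tau).
  - apply filter_forall. intro b. apply (@RInt_correct R_CompleteNormedModule).
    apply (@ex_RInt_continuous R_CompleteNormedModule); intros; apply Hc.
  - apply Hc.
Qed.

Lemma ft_bound (wo Lf : R) (f g : R -> R) : 0 < wo -> 0 <= Lf ->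
  (forall s t, 0 <= s -> 0 <= t -> Rabs (f t - f s) <= Lf * Rabs (t - s)) ->
  (forall s, 0 < s -> is_derive g s (wo * (f s - g s))) ->
  forall t, 1 <= t ->
  Rabs (f t - g t) <= Lf / wo + exp (- (wo * (t - 1))) * (Rabs (g 1 - f 1) + Lf * (t - 1)).
Proof.
  intros Hwo HLf Hlip Hg t Ht.
  assert (K := cmp (fun s => exp (wo * s) * (g s - f t)) (fun s => wo * exp (wo * s) * (f s - f t))
     (fun s => Lf * exp (wo * s) * ((t - s) + / wo)) (fun s => Lf * wo * exp (wo * s) * (t - s)) 1 t Ht).
  cbv beta in K.
  assert (K' : Rabs (exp (wo * t) * (g t - f t) - exp (wo * 1) * (g 1 - f t)) <=
    Lf * exp (wo * t) * (t - t + / wo) - Lf * exp (wo * 1) * (t - 1 + / wo)).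
  { apply K.
    - intros x Hx. auto_derive.
      + exists (wo * (f x - g x)). apply Hg. lra.
      + replace (Derive (fun y => g y) x) with (wo * (f x - g x)) by (symmetry; apply is_derive_unique; apply Hg; lra).
        field.
    - intros x Hx. auto_derive. auto. field. lra.
    - intros x Hx. pose proof (exp_pos (wo * x)).
      rewrite Rabs_mult, Rabs_mult, (Rabs_pos_eq wo), (Rabs_pos_eq (exp _)) by lra.
      specialize (Hlip t x ltac:(lra) ltac:(lra)).
      rewrite (Rabs_minus_sym x t), (Rabs_pos_eq (t - x)) in Hlip by lra.
      assert (0 <= wo * exp (wo * x)) by (apply Rmult_le_pos; lra).
      replace (Lf * wo * exp (wo * x) * (t - x)) with (wo * exp (wo * x) * (Lf * (t - x))) by ring.
      apply Rmult_le_compat_l; auto. }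
  clear K.
  assert (E1 : 0 < exp (wo * 1)) by apply exp_pos.
  assert (E : 0 < exp (wo * t)) by apply exp_pos.
  assert (L1 : Rabs (g 1 - f t) <= Rabs (g 1 - f 1) + Lf * (t - 1)).
  { specialize (Hlip 1 t ltac:(lra) ltac:(lra)). rewrite (Rabs_pos_eq (t - 1)) in Hlip by lra.
    replace (g 1 - f t) with ((g 1 - f 1) - (f t - f 1)) by ring.
    eapply Rle_trans. apply Rabs_triang. rewrite Rabs_Ropp. lra. }
  assert (0 <= Lf * exp (wo * 1) * (t - 1 + / wo)).
  { apply Rmult_le_pos. apply Rmult_le_pos; lra. pose proof (Rinv_0_lt_compat wo Hwo). lra. }
  assert (K2 : exp (wo * t) * Rabs (f t - g t) <= Lf * exp (wo * t) / wo + exp (wo * 1) * (Rabs (g 1 - f 1) + Lf * (t - 1))).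
  { rewrite <- (Rabs_pos_eq (exp (wo * t))) at 1 by lra. rewrite <- Rabs_mult.
    replace (exp (wo * t) * (f t - g t)) with (- (exp (wo * t) * (g t - f t) - exp (wo * 1) * (g 1 - f t)) - exp (wo * 1) * (g 1 - f t)) by ring.
    eapply Rle_trans. apply Rabs_triang. rewrite !Rabs_Ropp, Rabs_mult, (Rabs_pos_eq (exp (wo * 1))) by lra.
    replace (Lf * exp (wo * t) * (t - t + / wo)) with (Lf * exp (wo * t) / wo) in K' by (field; lra).
    assert (exp (wo * 1) * Rabs (g 1 - f t) <= exp (wo * 1) * (Rabs (g 1 - f 1) + Lf * (t - 1))) by (apply Rmult_le_compat_l; lra).
    lra. }
  replace (- (wo * (t - 1))) with (wo * 1 + - (wo * t)) by ring.
  rewrite exp_plus, exp_Ropp.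
  apply (Rmult_le_reg_l (exp (wo * t))); auto.
  replace (exp (wo * t) * (Lf / wo + exp (wo * 1) * / exp (wo * t) * (Rabs (g 1 - f 1) + Lf * (t - 1))))
    with (Lf * exp (wo * t) / wo + exp (wo * 1) * (Rabs (g 1 - f 1) + Lf * (t - 1))) by (field; lra).
  exact K2.
Qed.


Lemma Derive_of (f : R -> R) (x l : R) : is_derive f x l -> Derive (fun y : R => f y) x = l.
Proof. intro H. apply is_derive_unique. exact H. Qed.

Lemma W_deriv (kap kad t : R) (h h' e ed F : R -> R) :
  (forall t, is_derive h t (h' t)) ->
  (forall t, is_derive h' t (- kad * h' t - kap * h t)) ->
  (forall s, 0 < s -> is_derive e s (ed s)) ->
  (forall s, 0 < s -> is_derive ed s (F s - kap * e s - kad * ed s)) ->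
  forall s, 0 < s -> is_derive (fun s => h (t - s) * ed s + h' (t - s) * e s + kad * h (t - s) * e s) s (h (t - s) * F s).
Proof.
  intros Hh Hh' He Hed s Hs.
  auto_derive.
  - split. exists (h' (t + - s)); apply Hh.
    split. exists (F s - kap * e s - kad * ed s); apply Hed; lra.
    split. exists (- kad * h' (t + - s) - kap * h (t + - s)); apply Hh'.
    split. exists (ed s); apply He; lra.
    split. exists (h' (t + - s)); apply Hh.
    split. exists (ed s); apply He; lra.
    exact I.
  - rewrite (Derive_of h _ _ (Hh (t + - s))), (Derive_of h' _ _ (Hh' (t + - s))),
      (Derive_of e _ _ (He s Hs)), (Derive_of ed _ _ (Hed s Hs)). replace (t + - s) with (t - s) by ring. ring.
Qed.


Lemma psi_deriv (N g : R -> R) c t : (forall u, is_derive N u (g u)) ->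
  forall s, is_derive (fun s => - c * N (t - s)) s (c * g (t - s)).
Proof.
  intros HN s. auto_derive.
  - exists (g (t + - s)). apply HN.
  - rewrite (Derive_of N _ _ (HN (t + - s))). replace (t + - s) with (t - s) by ring. ring.
Qed.

Lemma core (kap kad B normh gap : R) (h h' e ed F : R -> R) :
  0 < kap -> 0 < kad -> 0 <= B -> 0 < gap ->
  (forall t, is_derive h t (h' t)) ->
  (forall t, is_derive h' t (- kad * h' t - kap * h t)) ->
  h 0 = 0 -> h' 0 = 1 ->
  is_RInt_gen (fun t => Rabs (h t)) (at_point 0) (Rbar_locally p_infty) normh ->
  (forall s, 0 < s -> is_derive e s (ed s)) ->
  (forall s, 0 < s -> is_derive ed s (F s - kap * e s - kad * ed s)) ->
  (forall eta, 0 < eta -> exists T, 1 <= T /\ forall s, T <= s -> Rabs (F s) <= B + eta) ->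
  (forall T, exists K, forall s, 1 <= s <= T -> Rabs (F s) <= K) ->
  exists T, forall t, T <= t -> e t <= normh * B + gap.
Proof.
  intros Hkap Hkad HB Hgap Hh Hh' H0 H0' Hint He Hed HFe HFb.
  set (N := fun b => RInt (fun u => Rabs (h u)) 0 b).
  assert (Hc : forall u, continuous (fun u => Rabs (h u)) u).
  { intro u. apply continuous_Rabs_comp. apply (@ex_derive_continuous R_AbsRing R_NormedModule). eexists; apply Hh. }
  assert (HN : forall tau, 0 <= tau -> N tau <= normh).
  { intros tau Ht. apply N_le; auto. intros; apply Rabs_pos. }
  assert (HNd : forall tau, is_derive N tau (Rabs (h tau))) by (apply N_deriv; auto).
  assert (N0 : N 0 = 0) by (unfold N; rewrite RInt_point; reflexivity).
  assert (Hn0 : 0 <= normh) by (rewrite <- N0; apply HN; lra).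
  set (eta := gap / (3 * (normh + 1))).
  assert (Heta : 0 < eta) by (unfold eta; apply Rdiv_lt_0_compat; lra).
  assert (Hetan : eta * normh <= gap / 3).
  { assert (eta * normh <= eta * (normh + 1)) by (apply Rmult_le_compat_l; lra).
    replace (eta * (normh + 1)) with (gap / 3) in H by (unfold eta; field; lra). lra. }
  destruct (HFe eta Heta) as [T1 [HT1 HF1]].
  destruct (HFb T1) as [K HK].
  assert (HK0 : 0 <= K) by (specialize (HK 1 ltac:(lra)); pose proof (Rabs_pos (F 1)); lra).
  set (den := K * (T1 - 1) + Rabs (ed 1) + (1 + kad) * Rabs (e 1) + 1).
  assert (Hden : 0 < den).
  { unfold den. assert (0 <= K * (T1 - 1)) by (apply Rmult_le_pos; lra).
    assert (0 <= (1 + kad) * Rabs (e 1)) by (apply Rmult_le_pos; [lra | apply Rabs_pos]).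
    pose proof (Rabs_pos (ed 1)). lra. }
  set (eta4 := gap / 3 / den).
  assert (Heta4 : 0 < eta4) by (unfold eta4; apply Rdiv_lt_0_compat; lra).
  destruct (h_decay kap kad h h' Hkap Hkad Hh Hh' H0 H0' eta4 Heta4) as [T2 HT2].
  exists (T1 + Rmax T2 0). intros t Ht.
  pose proof (Rmax_l T2 0). pose proof (Rmax_r T2 0).
  set (W := fun s => h (t - s) * ed s + h' (t - s) * e s + kad * h (t - s) * e s).
  assert (HW : forall s, 0 < s -> is_derive W s (h (t - s) * F s)).
  { intros s Hs. apply (W_deriv kap kad t h h' e ed F); auto. }
  assert (Wt : W t = e t).
  { unfold W. replace (t - t) with 0 by ring. rewrite H0, H0'. ring. }
  assert (W1 : Rabs (W 1) <= eta4 * (Rabs (ed 1) + (1 + kad) * Rabs (e 1))).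
  { destruct (HT2 (t - 1) ltac:(lra)) as [Ha Hb].
    unfold W.
    eapply Rle_trans. apply Rabs_triang.
    eapply Rle_trans. apply Rplus_le_compat_r. apply Rabs_triang.
    rewrite !Rabs_mult, (Rabs_pos_eq kad) by lra.
    pose proof (Rabs_pos (ed 1)). pose proof (Rabs_pos (e 1)).
    assert (Rabs (h (t - 1)) * Rabs (ed 1) <= eta4 * Rabs (ed 1)) by (apply Rmult_le_compat_r; lra).
    assert (Rabs (h' (t - 1)) * Rabs (e 1) <= eta4 * Rabs (e 1)) by (apply Rmult_le_compat_r; lra).
    assert (kad * Rabs (h (t - 1)) * Rabs (e 1) <= kad * eta4 * Rabs (e 1)).
    { apply Rmult_le_compat_r; auto. apply Rmult_le_compat_l; lra. }
    nra. }
  assert (W2 : Rabs (W T1 - W 1) <= K * eta4 * (T1 - 1)).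
  { assert (Kc := cmp W (fun s => h (t - s) * F s) (fun s => K * eta4 * s) (fun _ => K * eta4) 1 T1 HT1).
    replace (K * eta4 * (T1 - 1)) with (K * eta4 * T1 - K * eta4 * 1) by ring.
    apply Kc.
    - intros x Hx. apply HW. lra.
    - intros x Hx. auto_derive. auto. ring.
    - intros x Hx. destruct (HT2 (t - x) ltac:(lra)) as [Ha Hb].
      rewrite Rabs_mult. specialize (HK x Hx).
      rewrite (Rmult_comm K). apply Rmult_le_compat; auto using Rabs_pos. }
  assert (W3 : Rabs (W t - W T1) <= (B + eta) * normh).
  { assert (Kc := cmp W (fun s => h (t - s) * F s) (fun s => - (B + eta) * N (t - s))
       (fun s => (B + eta) * Rabs (h (t - s))) T1 t ltac:(lra)).
    eapply Rle_trans. apply Kc.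
    - intros x Hx. apply HW. lra.
    - intros x Hx. apply (psi_deriv N (fun u => Rabs (h u))). auto.
    - intros x Hx. rewrite Rabs_mult, Rmult_comm. apply Rmult_le_compat_r. apply Rabs_pos.
      apply HF1. lra.
    - replace (t - t) with 0 by ring. rewrite N0.
      assert (N (t - T1) <= normh) by (apply HN; lra).
      assert ((B + eta) * N (t - T1) <= (B + eta) * normh) by (apply Rmult_le_compat_l; lra).
      lra. }
  rewrite <- Wt.
  replace (W t) with (W 1 + (W T1 - W 1) + (W t - W T1)) by ring.
  pose proof (Rle_abs (W 1)). pose proof (Rle_abs (W T1 - W 1)). pose proof (Rle_abs (W t - W T1)).
  assert (eta4 * (K * (T1 - 1) + Rabs (ed 1) + (1 + kad) * Rabs (e 1)) <= gap / 3).
  { replace (gap / 3) with (eta4 * den) by (unfold eta4; field; lra).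
    apply Rmult_le_compat_l; unfold den; lra. }
  assert (Hx : (B + eta) * normh = normh * B + eta * normh) by ring.
  nra.
Qed.


Theorem corollaryC9
  (kap kad wo cr d eps Lf : R)
  (f x1 x2 xi h h' : R -> R) (normh : R) :
  0 < kap -> 0 < kad -> 0 < wo -> 0 < cr -> 0 < eps -> 0 <= Lf ->
  (forall s t, 0 <= s -> 0 <= t -> Rabs (f t - f s) <= Lf * Rabs (t - s)) ->
  filterlim x1 (at_right 0) (locally (x1 0)) ->
  filterlim x2 (at_right 0) (locally (x2 0)) ->
  filterlim xi (at_right 0) (locally (xi 0)) ->
  (forall t, 0 < t -> is_derive x1 t (x2 t)) ->
  (forall t, 0 < t -> is_derive x2 t
      (f t - closed_loop_lambda kap kad wo (ref_traj d eps cr (x1 0) (x2 0)) x1 x2 xi t)) ->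
  (forall t, 0 < t -> is_derive xi t
      (- wo * xi t - wo ^ 2 * x2 t
       + wo * closed_loop_lambda kap kad wo (ref_traj d eps cr (x1 0) (x2 0)) x1 x2 xi t)) ->
  (forall t, is_derive h t (h' t)) ->
  (forall t, is_derive h' t (- kad * h' t - kap * h t)) ->
  h 0 = 0 -> h' 0 = 1 ->
  is_RInt_gen (fun t => Rabs (h t)) (at_point 0) (Rbar_locally p_infty) normh ->
  eps > normh * Lf / wo ->
  exists T : R, forall t, T <= t -> x1 t <= d.
Proof.
  intros Hkap Hkad Hwo Hcr Heps HLf Hlip _ _ _ Hx1 Hx2 Hxi Hh Hh' H0 H0' Hnorm Hgap.
  set (r := ref_traj d eps cr (x1 0) (x2 0)) in *.
  set (A := x1 0 - (d - eps)).
  set (Bc := x2 0 + cr * A).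
  assert (Hr : forall t, r t = (d - eps) + A * exp (- cr * t) + Bc * t * exp (- cr * t)).
  { intro t. reflexivity. }
  set (R1 := fun t => A * (- cr * exp (- cr * t)) + Bc * exp (- cr * t) + Bc * t * (- cr * exp (- cr * t))).
  assert (Hr1d : forall t, is_derive r t (R1 t)).
  { intro t. apply (is_derive_ext (fun t => (d - eps) + A * exp (- cr * t) + Bc * t * exp (- cr * t))).
    intro; symmetry; apply Hr.
    auto_derive. auto. unfold R1. ring. }
  assert (Hr1 : forall t, Derive r t = R1 t) by (intro; apply is_derive_unique; apply Hr1d).
  assert (Hr2 : forall t, is_derive (Derive r) t (Derive_n r 2 t)).
  { intro t. change (Derive_n r 2 t) with (Derive (Derive r) t).
    apply Derive_correct. apply (ex_derive_ext R1). intro; symmetry; apply Hr1.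
    unfold R1. auto_derive. auto. }
  set (lam := closed_loop_lambda kap kad wo r x1 x2 xi) in *.
  set (g := fun s => xi s + wo * x2 s).
  assert (Hg : forall s, 0 < s -> is_derive g s (wo * (f s - g s))).
  { intros s Hs. unfold g. auto_derive.
    - split. eexists; apply Hxi; auto. split. eexists; apply Hx2; auto. exact I.
    - rewrite (Derive_of xi _ _ (Hxi s Hs)), (Derive_of x2 _ _ (Hx2 s Hs)). ring. }
  set (B := Lf / wo).
  assert (HB : 0 <= B) by (unfold B; apply Rdiv_le_0_compat; lra).
  assert (HnB : normh * B = normh * Lf / wo) by (unfold B; field; lra).
  set (gap := (eps - normh * B) / 2).
  assert (Hgp : 0 < gap) by (unfold gap; lra).
  set (K0 := Rabs (g 1 - f 1)).
  assert (HK0 : 0 <= K0) by apply Rabs_pos.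
  assert (FB := ft_bound wo Lf f g Hwo HLf Hlip Hg).
  destruct (core kap kad B normh gap h h' (fun s => x1 s - r s) (fun s => x2 s - Derive r s)
     (fun s => f s - g s) Hkap Hkad HB Hgp Hh Hh' H0 H0' Hnorm) as [Te HTe].
  - intros s Hs. apply (is_derive_minus x1 r). auto. rewrite Hr1. apply Hr1d.
  - intros s Hs. apply (is_derive_eq _ _ (minus (f s - lam s) (Derive_n r 2 s))).
    apply (is_derive_minus x2 (Derive r)). auto. apply Hr2.
    change (minus (f s - lam s) (Derive_n r 2 s)) with ((f s - lam s) - Derive_n r 2 s).
    unfold lam, closed_loop_lambda, g. match goal with |- ?a = ?b => change (@eq R a b) end. ring.
  - intros eta Heta.
    destruct (expo_small K0 Lf wo eta HK0 HLf Hwo Heta) as [T' HT'].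
    exists (Rmax 1 (T' + 1)). split. apply Rmax_l.
    intros s Hs. pose proof (Rmax_l 1 (T' + 1)). pose proof (Rmax_r 1 (T' + 1)).
    specialize (FB s ltac:(lra)). specialize (HT' (s - 1) ltac:(lra)).
    fold B K0 in FB. lra.
  - intros T. exists (B + (K0 + Lf * Rabs (T - 1))).
    intros s Hs. specialize (FB s ltac:(lra)). fold B K0 in FB.
    assert (E1 : exp (- (wo * (s - 1))) <= 1).
    { apply Rle_trans with (exp 0); [|rewrite exp_0; lra].
      assert (0 <= wo * (s - 1)) by (apply Rmult_le_pos; lra).
      destruct (Req_dec (wo * (s - 1)) 0) as [Hz|Hz]. rewrite Hz, Ropp_0; lra.
      left; apply exp_increasing. lra. }
    assert (E0 : 0 < exp (- (wo * (s - 1)))) by apply exp_pos.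
    assert (L : Lf * (s - 1) <= Lf * Rabs (T - 1)).
    { apply Rmult_le_compat_l; auto. rewrite Rabs_pos_eq by lra. lra. }
    assert (0 <= Lf * (s - 1)) by (apply Rmult_le_pos; lra).
    assert (exp (- (wo * (s - 1))) * (K0 + Lf * (s - 1)) <= 1 * (K0 + Lf * Rabs (T - 1))).
    { apply Rmult_le_compat; lra. }
    lra.
  - destruct (expo_small (Rabs A) (Rabs Bc) cr gap (Rabs_pos _) (Rabs_pos _) Hcr Hgp) as [Tr HTr].
    exists (Rmax Te (Rmax Tr 0)). intros t Ht.
    pose proof (Rmax_l Te (Rmax Tr 0)). pose proof (Rmax_r Te (Rmax Tr 0)).
    pose proof (Rmax_l Tr 0). pose proof (Rmax_r Tr 0).
    specialize (HTe t ltac:(lra)). specialize (HTr t ltac:(lra)).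
    simpl in HTe.
    assert (Hrt : r t <= d - eps + gap).
    { rewrite Hr. replace (- cr * t) with (- (cr * t)) by ring.
      pose proof (exp_pos (- (cr * t))).
      assert (A * exp (- (cr * t)) <= Rabs A * exp (- (cr * t))) by (apply Rmult_le_compat_r; [lra | apply Rle_abs]).
      assert (Bc * t * exp (- (cr * t)) <= Rabs Bc * t * exp (- (cr * t))).
      { apply Rmult_le_compat_r; [lra|]. apply Rmult_le_compat_r; [lra | apply Rle_abs]. }
      lra. }
    unfold gap in *. lra.
Qed.
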